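(* Let $X$ be a $T_0$ space, $F\subseteq X$ and $x\in X$. Then $F\ll_{I_2}x$ if and only if for every net $(x_i)_{i\in I}$ in $X$ that $GSI_2$-converges to $x$ and every open set $U$ of $X$ with $F\subseteq U$, we have $x_i\in U$ eventually.
   Context: For a $T_0$ space $X$, the specialization order is $x\le y$ iff $x\in \mathrm{cl}\{y\}$; $\uparrow A=\{x: a\le x\text{ for some } a\in A\}$, $\uparrow x=\uparrow\{x\}$; $A^\uparrow$, $A^\downarrow$ are the sets of upper and lower bounds of $A$, and $A^\delta=(A^\uparrow)^\downarrow$. A nonempty $A\subseteq X$ is irreducible if whenever $A\subseteq F_1\cup F_2$ with $F_1,F_2$ closed, $A\subseteq F_1$ or $A\subseteq F_2$. $X^{(<\omega)}$ is the set of nonempty finite subsets of $X$. $P_S(X)$ is the set of nonempty compact saturated (upper) subsets of $X$ with the upper Vietoris topology, basis $\{\square U: U\text{ open}\}$, $\square U=\{Q: Q\subseteq U\}$. A net is eventually in $U$ if from some index on all its terms lie in $U$. For $A,B\subseteq X$, $A\ll_{I_2}B$ means: for every irreducible $D\subseteq X$, $D^\delta\cap B\neq\emptyset$ implies $A\cap\mathrm{cl}D\ne\emptyset$; $A\ll_{I_2}x$ means $A\ll_{I_2}\{x\}$. A net $(x_i)_{i\in I}$ $GSI_2$-converges to $x$ if there exists $\mathcal F\subseteq X^{(<\omega)}$ with $\{\uparrow G: G\in\mathcal F\}$ irreducible in $P_S(X)$ such that (i) for every open $U$, if $\uparrow G\subseteq U$ for some $G\in\mathcal F$ then $x_i\in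 U$ eventually, and (ii) $\bigcap_{G\in\mathcal F}\uparrow G\subseteq\uparrow x$. *)

(* Defs.v *)
From HB Require Import structures.
From mathcomp Require Import all_boot all_order.
From mathcomp Require Import all_classical.
From mathcomp Require Import topology.

Set Implicit Arguments.
Unset Strict Implicit.
Unset Printing Implicit Defensive.
Local Open Scope classical_set_scope.

Section GSI2.
Variable X : topologicalType.

Definition spec_le (x y : X) : Prop := closure [set y] x.

Definition upset (A : set X) : set X := [set x | exists2 a, A a & spec_le a x].

Definition ubounds (A : set X) : set X := [set u | forall a, A a -> spec_le a u].
Definition lbounds (A : set X) : set X := [set l | forall a, A a -> spec_le l a].
Definition delta (A : set X) : set X := lbounds (ubounds A).

Definition irreducible (A : set X) : Prop :=
  A !=set0 /\ forall F1 F2 : set X, closed F1 -> closed F2 ->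
    A `<=` F1 `|` F2 -> A `<=` F1 \/ A `<=` F2.

Definition llI2 (A B : set X) : Prop :=
  forall D : set X, irreducible D -> delta D `&` B !=set0 -> A `&` closure D !=set0.

Definition fin_nonempty (G : set X) : Prop := finite_set G /\ G !=set0.

Definition saturated (Q : set X) : Prop := upset Q = Q.
Definition PS (Q : set X) : Prop := Q !=set0 /\ compact Q /\ saturated Q.

(* upper Vietoris topology on P_S(X), basis {box U | U open},
   box U = {Q in P_S(X) | Q `<=` U}.  A family W of elements of P_S(X)
   is open iff it is a union of basic sets. *)
Definition box (U : set X) : set (set X) := [set Q | PS Q /\ Q `<=` U].
Definition PS_open (W : set (set X)) : Prop :=
  W `<=` PS /\ forall Q, W Q -> exists U : set X, open U /\ box U Q /\ box U `<=` W.
Definition PS_closed (C : set (set X)) : Prop :=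
  C `<=` PS /\ PS_open (PS `\` C).
Definition PS_irreducible (A : set (set X)) : Prop :=
  A `<=` PS /\ A !=set0 /\
  forall C1 C2, PS_closed C1 -> PS_closed C2 ->
    A `<=` C1 `|` C2 -> A `<=` C1 \/ A `<=` C2.

Definition directed (I : Type) (le : I -> I -> Prop) : Prop :=
  (forall i, le i i) /\ (forall i j k, le i j -> le j k -> le i k) /\
  (exists i : I, True) /\ (forall i j, exists k, le i k /\ le j k).

Definition eventually_in (I : Type) (le : I -> I -> Prop) (net : I -> X) (U : set X) :=
  exists i0, forall i, le i0 i -> U (net i).

Definition GSI2_converges (I : Type) (le : I -> I -> Prop) (net : I -> X) (x : X) :=
  exists Fam : set (set X),
    Fam `<=` fin_nonempty /\
    PS_irreducible [set upset G | G in Fam] /\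
    (forall U : set X, open U -> (exists2 G, Fam G & upset G `<=` U) ->
        eventually_in le net U) /\
    \bigcap_(G in Fam) upset G `<=` upset [set x].

End GSI2.

(* Main.v *)
Require Import Defs.
From mathcomp Require Import all_boot all_order all_classical topology.
Local Open Scope classical_set_scope.
Set Implicit Arguments.
Unset Strict Implicit.

Section Help.
Variable X : topologicalType.

Lemma nbhs_up (y z : X) (B : set X) : nbhs y B -> spec_le y z -> B z.
Proof. by move=> By /(_ B By) [w [-> ?]]. Qed.

Lemma open_up (W : set X) y z : open W -> W y -> spec_le y z -> W z.
Proof. by move=> oW Wy; apply: nbhs_up; apply: open_nbhs_nbhs. Qed.

Lemma closed_down (K : set X) y z : closed K -> K z -> spec_le y z -> K y.
Proof.
move=> cK Kz yz; apply: contrapT => Ky.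
by have := open_up (closed_openC cK) Ky yz.
Qed.

Lemma spec_refl (y : X) : spec_le y y.
Proof. exact: subset_closure. Qed.

Lemma spec_trans (x y z : X) : spec_le x y -> spec_le y z -> spec_le x z.
Proof.
move=> xy yz; apply: (closed_down (@closed_closure _ [set z]) _ xy).
exact: yz.
Qed.

Lemma upset_up (A : set X) y z : upset A y -> spec_le y z -> upset A z.
Proof. by move=> [a Aa ay] yz; exists a => //; apply: spec_trans yz. Qed.

Lemma PS_single (d : X) : PS (upset [set d]).
Proof.
split; first by exists d; exists d => //; apply: spec_refl.
split; last first.
  apply/seteqP; split => y.
    by move=> [a Ua ay]; apply: upset_up ay.
  by move=> Uy; exists y => //; apply: spec_refl.
move=> F PF Fd; exists d; split; first by exists d => //; apply: spec_refl.
move=> A B FA Bd.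
have [w [Aw Uw]] := filter_ex (filterI FA Fd).
exists w; split => //; case: Uw => a -> aw; exact: nbhs_up Bd aw.
Qed.

End Help.

Section Back.
Variable X : topologicalType.

Lemma closed_of_openC (K : set X) : open (~` K) -> closed K.
Proof. by rewrite openC. Qed.

Lemma back (F : set X) (x : X) :
  (forall (I : Type) (le : I -> I -> Prop) (net : I -> X),
     directed le -> GSI2_converges le net x ->
     forall U : set X, open U -> F `<=` U -> eventually_in le net U) ->
  llI2 F [set x].
Proof.
move=> H D [[d0 Dd0] irrD] [x' [xD xx]]; rewrite /= in xx; subst x'.
apply: contrapT => nF.
pose Idx := {V : set X | open V /\ V `&` D !=set0}.
pose le (i j : Idx) := proj1_sig j `<=` proj1_sig i.
pose net (i : Idx) : X := proj1_sig (cid (proj2 (proj2_sig i))).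
have netP (i : Idx) : proj1_sig i (net i) /\ D (net i).
  by rewrite /net; case: (cid _) => y [].
have dir : directed le.
  split; first by move=> i.
  split; first by move=> i j k ij jk y /jk /ij.
  split.
    by exists (exist _ setT (conj openT (ex_intro _ d0 (conj I Dd0)))).
  move=> [V [oV VD]] [W [oW WD]].
  have VWD : (V `&` W) `&` D !=set0.
    apply: contrapT => nVW.
    have cV : closed (~` V) by rewrite closedC.
    have cW : closed (~` W) by rewrite closedC.
    have cov : D `<=` ~` V `|` ~` W.
      move=> y Dy; apply: contrapT => /not_orP [nV nW]; apply: nVW; exists y.
      by split => //; split; apply: contrapT.
    have [sub|sub] := irrD _ _ cV cW cov.
    - by case: VD => y [Vy Dy]; apply: (sub y Dy).
    - by case: WD => y [Wy Dy]; apply: (sub y Dy).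
  exists (exist _ (V `&` W) (conj (openI oV oW) VWD)).
  by split => y [].
have conv : GSI2_converges le net x.
  exists [set [set d] | d in D].
  split.
    move=> _ [d Dd <-]; split; last by exists d.
    exact: finite_set1.
  split.
    split.
      by move=> _ [_ [d Dd <-] <-]; apply: PS_single.
    split.
      by exists (upset [set d0]); exists [set d0] => //; exists d0.
    move=> C1 C2 [C1P oC1] [C2P oC2] sub.
    pose K1 := [set y | C1 (upset [set y])].
    pose K2 := [set y | C2 (upset [set y])].
    have cK (C : set (set X)) : PS_open (@PS X `\` C) -> closed [set y | C (upset [set y])].
      move=> [_ oC]; apply: closed_of_openC; rewrite openE => y /= nCy.
      have [U [oU [[_ bU] sU]]] := oC (upset [set y]) (conj (PS_single y) nCy).
      apply: (@filterS _ _ _ U); last first.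
        apply: open_nbhs_nbhs; split => //; apply: bU; exists y => //.
        exact: spec_refl.
      move=> z Uz; have : box U (upset [set z]).
        split; first exact: PS_single.
        by move=> w [a -> aw]; apply: open_up aw.
      by move/sU => [].
    have [s1|s2] := irrD K1 K2 (cK _ oC1) (cK _ oC2)
       (fun y Dy => sub _ (ex_intro2 _ _ [set y] (ex_intro2 _ _ y Dy erefl) erefl)).
    - by left => _ [_ [d Dd <-] <-]; apply: s1.
    - by right => _ [_ [d Dd <-] <-]; apply: s2.
  split.
    move=> U oU [_ [d Dd <-] sU].
    have Ud : U d by apply: sU; exists d => //; apply: spec_refl.
    exists (exist _ U (conj oU (ex_intro _ d (conj Ud Dd)))).
    by move=> i /= le_i; apply: le_i; case: (netP i).
  move=> y yI; exists x => //; apply: xD => d Dd.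
  by have [a -> ay] := yI [set d] (ex_intro2 _ _ d Dd erefl).
have oU : open (~` closure D) by apply: closed_openC; apply: closed_closure.
have FU : F `<=` ~` closure D.
  by move=> y Fy cy; apply: nF; exists y.
have [i0 Hi] := H Idx le net dir conv _ oU FU.
apply: (Hi i0 (fun y h => h)); apply: subset_closure; by case: (netP i0).
Qed.

End Back.

Section Fwd.
Variable X : topologicalType.

Lemma chain_seq (U : set X) (C : set (set X)) (s : seq X) :
  total_on C subset ->
  (forall y, y \in s -> U y \/ exists2 V, C V & V y) ->
  (forall y, y \in s -> U y) \/ exists2 V, C V & forall y, y \in s -> U y \/ V y.
Proof.
move=> tot; elim: s => [|a s IH] H; first by left.
have IH' := IH (fun y ys => H y (mem_behead (s := a :: s) ys)).
have Ha := H a (mem_head a s).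
case: IH' => [allU|[V CV HV]]; case: Ha => [Ua|[W CW Wa]].
- left => y; rewrite in_cons => /orP [/eqP ->|ys] //; exact: allU.
- right; exists W => // y; rewrite in_cons => /orP [/eqP ->|ys]; [by right|].
  by left; apply: allU.
- right; exists V => // y; rewrite in_cons => /orP [/eqP ->|ys]; [by left|].
  exact: HV.
- have [VW|WV] := tot V W CV CW.
  + right; exists W => // y; rewrite in_cons => /orP [/eqP ->|ys]; [by right|].
    by case: (HV y ys) => [?|/VW ?]; [left|right].
  + right; exists V => // y; rewrite in_cons => /orP [/eqP ->|ys]; first by right; apply: WV.
    exact: HV.
Qed.


Lemma fwd (F : set X) (x : X) :
  llI2 F [set x] ->
  (forall (I : Type) (le : I -> I -> Prop) (net : I -> X),
     directed le -> GSI2_converges le net x ->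
     forall U : set X, open U -> F `<=` U -> eventually_in le net U).
Proof.
move=> Hll I le net _ [Fam [finF [[imPS [ne irr]] [conv inter]]]] U oU FU.
apply: conv => //; apply: contrapT => nG.
have nGU : forall G, Fam G -> ~ G `<=` U.
  move=> G FG GU; apply: nG; exists G => // z [a Ga az].
  exact: open_up (GU a Ga) az.
pose P (V : set X) := open V /\ forall G, Fam G -> ~ G `<=` U `|` V.
have [A [[oA PA] maxA]] : exists A, P A /\ forall B, A `<` B -> ~ P B.
  apply: Zorn_bigcup => Ch ChP tot; split.
    by apply: bigcup_open => V /ChP [].
  move=> G FG sub.
  have [s Gs] := (finite_seqP G).1 (finF G FG).1.
  have hs : forall y, y \in s -> U y \/ exists2 V, Ch V & V y.
    move=> y ys; have : G y by rewrite Gs.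
    by move/sub => [Uy|[V CV Vy]]; [left|right; exists V].
  case: (@chain_seq U Ch s tot hs) => [allU|[V CV HV]].
    by apply: (nGU G FG) => y; rewrite Gs => /allU.
  have [_ hV] := ChP V CV; apply: (hV G FG) => y; rewrite Gs => /HV.
  done.
pose K := ~` (U `|` A).
have cK : closed K by rewrite /K closedC; apply: openU.
have key : forall G, Fam G -> G `&` K !=set0.
  move=> G FG; apply: contrapT => nK; apply: (PA G FG) => y Gy.
  apply: contrapT => nUA; apply: nK; exists y; split => //.
have maxi : forall Fi, closed Fi -> ~ K `<=` Fi ->
    exists2 G, Fam G & G `<=` U `|` (A `|` ~` Fi).
  move=> Fi cFi nKF; apply: contrapT => nex.
  have [y [Ky nFy]] : exists y, K y /\ ~ Fi y.
    apply: contrapT => nn; apply: nKF => y Ky; apply: contrapT => nFy.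
    by apply: nn; exists y.
  apply: (maxA (A `|` ~` Fi)).
    split; first by move=> z Az; left.
    move=> sub; have := sub y (or_intror nFy) => Ay.
    by apply: Ky; right.
  split; first by apply: openU => //; apply: closed_openC.
  by move=> G FG sub; apply: nex; exists G.
pose Cl (Fi : set X) := [set Q | PS Q /\ Q `&` (K `&` Fi) !=set0].
have PSC : forall Fi, closed Fi -> PS_closed (Cl Fi).
  move=> Fi cFi; split; first by move=> Q [].
  split; first by move=> Q [].
  move=> Q [PSQ nCQ]; exists (~` (K `&` Fi)); split.
    by apply: closed_openC; apply: closedI.
  split.
    split => // z Qz KFz; apply: nCQ; split => //; by exists z.
  move=> Q' [PSQ' sub]; split => // -[_ [z [Qz KFz]]].
  exact: sub z Qz KFz.
have Kirr : irreducible K.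
  split.
    have [_ [G0 FG0 _]] := ne.
    by have [y [_ Ky]] := key G0 FG0; exists y.
  move=> F1 F2 cF1 cF2 cov; apply: contrapT => /not_orP [n1 n2].
  have [G1 FG1 sub1] := maxi F1 cF1 n1.
  have [G2 FG2 sub2] := maxi F2 cF2 n2.
  have imC : [set upset G | G in Fam] `<=` Cl F1 `|` Cl F2.
    move=> _ [G FG <-]; have [y [Gy Ky]] := key G FG.
    have PSG : PS (upset G) by apply: imPS; exists G.
    have uy : upset G y by exists y => //; apply: spec_refl.
    case: (cov y Ky) => Fy; [left|right]; split => //; exists y; split => //.
  have contra : forall Fi G, closed Fi -> Fam G -> G `<=` U `|` (A `|` ~` Fi) -> ~ Cl Fi (upset G).
    move=> Fi G cFi FG sub [_ [z [[a Ga az] [Kz Fz]]]].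
    have oW : open (U `|` (A `|` ~` Fi)).
      by apply: openU => //; apply: openU => //; apply: closed_openC.
    have := open_up oW (sub a Ga) az => -[Uz|[Az|nFz]].
    - by apply: Kz; left.
    - by apply: Kz; right.
    - exact: nFz Fz.
  have [s|s] := irr _ _ (PSC F1 cF1) (PSC F2 cF2) imC.
  - by apply: (contra F1 G1 cF1 FG1 sub1); apply: s; exists G1.
  - by apply: (contra F2 G2 cF2 FG2 sub2); apply: s; exists G2.
have xK : delta K x.
  move=> u ub; have : upset [set x] u.
    apply: inter => G FG; have [y [Gy Ky]] := key G FG; exists y => //; exact: ub.
  by case => a ->.
have [y [Fy cy]] := Hll K Kirr (ex_intro _ x (conj xK erefl)).
have e := (closure_id K).1 cK; rewrite -e in cy.
by apply: cy; left; apply: FU.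
Qed.

End Fwd.

Unset Implicit Arguments.
Set Strict Implicit.
Theorem proposition4p3 (X : topologicalType) (hT0 : kolmogorov_space X)
    (F : set X) (x : X) :
  llI2 F [set x] <->
  (forall (I : Type) (le : I -> I -> Prop) (net : I -> X),
     directed le -> GSI2_converges le net x ->
     forall U : set X, open U -> F `<=` U -> eventually_in le net U).
Proof.
split; [exact: fwd | exact: back].
Qed.
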